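(* Let $x_1,\dots,x_n\in\mathbb{R}^p$, let $u_1,\dots,u_s$ be induced points chosen from $\{x_1,\dots,x_n\}$, let $\epsilon>0$ and $\eta_{1,n}>0$, and let $k_{\eta_{1,n}}(x,x')=\exp(-\|x-x'\|^2/(4\epsilon^2))\mathbf 1_{\{\|x-x'\|<\eta_{1,n}\}}$. Define the two-step graph Laplacian $L=I-(Z\Lambda^{-1}Z^\top)^{1/2}$ and the matrices $\tilde Z,\tilde\Lambda$ as in the context (assuming all normalizing sums are positive). Then $L=I-(\tilde Z\tilde\Lambda^{-1}\tilde Z^\top)^{1/2}$.
   Context: Notation $B_{i\cdot}=\sum_jB_{ij}$, $B_{\cdot j}=\sum_iB_{ij}$. For each $i$, $u_{\tau(i)}$ is the nearest induced point to $x_i$ (i.e. $\|u_{\tau(i)}-x_i\|=\min_j\|u_j-x_i\|$), and $n_j=\#\{i:\tau(i)=j\}$. Two-step objects ($1\le i\le n$, $1\le j\le s$): $A_{ij}=\dfrac{n_jk_{\eta_{1,n}}(x_i,u_j)}{\sum_{q=1}^nk_{\eta_{1,n}}(x_q,u_j)\sum_{q=1}^sn_qk_{\eta_{1,n}}(x_i,u_q)}$, $Z_{ij}=A_{ij}/A_{i\cdot}$, $\Lambda=\mathrm{diag}(Z_{\cdot1},\dots,Z_{\cdot s})$, and the square root is the PSD one. Approximated-point-cloud objects ($1\le i,j\le n$): $\tilde K_{ij}=k_{\eta_{1,n}}(x_i,u_{\tau(j)})$, $\tilde A_{ij}=\tilde K_{ij}/(\tilde K_{i\cdot}\tilde K_{\cdot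 j})$, $\tilde Z_{ij}=\tilde A_{ij}/\tilde A_{i\cdot}$, $\tilde\Lambda=\mathrm{diag}(\tilde Z_{\cdot1},\dots,\tilde Z_{\cdot n})$. *)

(* Defs.v *)
From HB Require Import structures.
From mathcomp Require Import all_boot all_order all_algebra.
From mathcomp Require Import all_classical all_reals all_analysis.
From Stdlib Require Import ClassicalEpsilon.
Set Implicit Arguments. Unset Strict Implicit. Unset Printing Implicit Defensive.
Import Order.TTheory GRing.Theory Num.Theory.
Local Open Scope ring_scope.

Section Defs.
Context {R : realType}.

Definition sqdist (p : nat) (x y : 'rV[R]_p) : R := \sum_(k < p) (x 0 k - y 0 k) ^+ 2.
Definition dist (p : nat) (x y : 'rV[R]_p) : R := Num.sqrt (sqdist x y).

Definition kern (p : nat) (eps eta : R) (x y : 'rV[R]_p) : R :=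
  expR (- (dist x y) ^+ 2 / (4 * eps ^+ 2)) * (if dist x y < eta then 1 else 0).

Definition rowsum (m k : nat) (B : 'M[R]_(m, k)) (i : 'I_m) : R := \sum_(j < k) B i j.
Definition colsum (m k : nat) (B : 'M[R]_(m, k)) (j : 'I_k) : R := \sum_(i < m) B i j.

Definition cnt (n s : nat) (tau : 'I_n -> 'I_s) (j : 'I_s) : R :=
  #|[set i | tau i == j]|%:R.

Definition Amat (p n s : nat) (eps eta : R) (x : 'I_n -> 'rV[R]_p)
  (u : 'I_s -> 'rV[R]_p) (tau : 'I_n -> 'I_s) : 'M[R]_(n, s) :=
  \matrix_(i < n, j < s)
    (cnt tau j * kern eps eta (x i) (u j) /
      ((\sum_(q < n) kern eps eta (x q) (u j)) *
       (\sum_(q < s) cnt tau q * kern eps eta (x i) (u q)))).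

Definition Zmat (m k : nat) (B : 'M[R]_(m, k)) : 'M[R]_(m, k) :=
  \matrix_(i < m, j < k) (B i j / rowsum B i).

Definition Lam (m k : nat) (Z : 'M[R]_(m, k)) : 'M[R]_k :=
  diag_mx (\row_(j < k) colsum Z j).

Definition Ktil (p n s : nat) (eps eta : R) (x : 'I_n -> 'rV[R]_p)
  (u : 'I_s -> 'rV[R]_p) (tau : 'I_n -> 'I_s) : 'M[R]_n :=
  \matrix_(i < n, j < n) kern eps eta (x i) (u (tau j)).

Definition Atil_of (m : nat) (K : 'M[R]_m) : 'M[R]_m :=
  \matrix_(i < m, j < m) (K i j / (rowsum K i * colsum K j)).

Definition psd (m : nat) (B : 'M[R]_m) : Prop :=
  B^T = B /\ forall v : 'cV[R]_m, 0 <= (v^T *m B *m v) 0 0.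

(* the PSD square root: a chosen PSD B with B B = M (unique when M is PSD) *)
Definition sqrtm (m : nat) (M : 'M[R]_m) : 'M[R]_m :=
  epsilon (inhabits 0) (fun B => psd B /\ B *m B = M).

End Defs.

(* Main.v *)
Require Import Defs.
From HB Require Import structures.
From mathcomp Require Import all_boot all_order all_algebra.
From mathcomp Require Import all_classical all_reals all_analysis.
From mathcomp Require Import ring lra.
Import Order.TTheory GRing.Theory Num.Theory.
Local Open Scope ring_scope.
Lemma gram_eq (R : realType) (m k : nat) (Y : 'M[R]_(m, k)) :
  (forall j, colsum Y j != 0) ->
  Y *m invmx (Lam Y) *m Y^T =
  \matrix_(a, b) \sum_j (Y a j * Y b j / colsum Y j).
Proof.
move=> H.
set E := diag_mx (\row_j (colsum Y j)^-1).
have DE : Lam Y *m E = 1%:M.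
  rewrite /Lam /E mulmx_diag; apply/matrixP => i j.
  rewrite !mxE; case: eqP => [->|_]; rewrite ?mulr1n ?mulr0n ?mxE ?divff //.
have [U _] := mulmx1_unit DE.
have -> : invmx (Lam Y) = E.
  by rewrite -[invmx _]mulmx1 -DE mulmxA mulVmx // mul1mx.
apply/matrixP => a b; rewrite /E mul_mx_diag !mxE. 
by apply: eq_bigr => j _; rewrite !mxE mulrAC.
Qed.

Lemma sum_tau (R : realType) (n s : nat) (tau : 'I_n -> 'I_s) (F : 'I_s -> R) :
  \sum_(j < n) F (tau j) = \sum_(q < s) cnt tau q * F q.
Proof.
rewrite (partition_big tau predT) //=; apply: eq_bigr => q _.
rewrite (eq_bigr (fun _ => F q)); last by move=> j /eqP ->.
rewrite sumr_const /cnt cardsE mulr_natl.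
done.
Qed.
Theorem lemma1 (R : realType) (p n s : nat) (eps eta : R)
  (x : 'I_n -> 'rV[R]_p) (u : 'I_s -> 'rV[R]_p) (sigma : 'I_s -> 'I_n)
  (tau : 'I_n -> 'I_s) :
  0 < eps -> 0 < eta ->
  injective sigma -> (forall j, u j = x (sigma j)) ->
  (forall i j, dist (u (tau i)) (x i) <= dist (u j) (x i)) ->
  (* all normalizing sums are positive *)
  (forall j, 0 < \sum_(q < n) kern eps eta (x q) (u j)) ->
  (forall i, 0 < \sum_(q < s) cnt tau q * kern eps eta (x i) (u q)) ->
  (forall i, 0 < rowsum (Amat eps eta x u tau) i) ->
  (forall j, 0 < colsum (Zmat (Amat eps eta x u tau)) j) ->
  (forall i, 0 < rowsum (Ktil eps eta x u tau) i) ->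
  (forall j, 0 < colsum (Ktil eps eta x u tau) j) ->
  (forall i, 0 < rowsum (Atil_of (Ktil eps eta x u tau)) i) ->
  (forall j, 0 < colsum (Zmat (Atil_of (Ktil eps eta x u tau))) j) ->
  let Z := Zmat (Amat eps eta x u tau) in
  let Zt := Zmat (Atil_of (Ktil eps eta x u tau)) in
  let L := 1%:M - sqrtm (Z *m invmx (Lam Z) *m Z^T) in
  L = 1%:M - sqrtm (Zt *m invmx (Lam Zt) *m Zt^T).
Proof.
move=> _ _ _ _ _ Hd He HA HZ _ _ HAt HZt Z Zt L.
pose k := fun i q => kern eps eta (x i) (u q).
pose c : 'I_s -> R := cnt tau.
pose d := fun q => \sum_(i < n) k i q.
pose e := fun i => \sum_(q < s) c q * k i q.
pose W := fun i => \sum_(q < s) c q * k i q / d q.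
have d0 q : d q != 0 by rewrite gt_eqF ?Hd.
have e0 i : e i != 0 by rewrite gt_eqF ?He.
have rA a : rowsum (Amat eps eta x u tau) a = W a / e a.
  rewrite /rowsum /W mulr_suml; apply: eq_bigr => q _; rewrite mxE.
  rewrite /k /d /e invfM; ring.
have W0 a : W a != 0.
  have := HA a; rewrite rA => /gt_eqF; apply: contraFN => /eqP ->; by rewrite mul0r.
have Z1 a q : Z a q = c q * k a q / d q / W a.
  rewrite /Z /Zmat mxE rA mxE -/(k a q) -/(d q) -/(e a) -/(c q).
  by field; rewrite ?d0 ?e0 ?W0.
have rK a : rowsum (Ktil eps eta x u tau) a = e a.
  rewrite /rowsum (eq_bigr (fun j => k a (tau j))); last by move=> j _; rewrite mxE.
  exact: sum_tau.
have cK j : colsum (Ktil eps eta x u tau) j = d (tau j).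
  by rewrite /colsum; apply: eq_bigr => i _; rewrite mxE.
have rAt a : rowsum (Atil_of (Ktil eps eta x u tau)) a = W a / e a.
  rewrite /rowsum (eq_bigr (fun j => (fun q => k a q / (e a * d q)) (tau j))); last first.
    by move=> j _; rewrite mxE rK cK mxE.
  rewrite (@sum_tau R n s tau (fun q => k a q / (e a * d q))) /W mulr_suml; apply: eq_bigr => q _.
  rewrite invfM; ring.
have Zt1 a j : Zt a j = k a (tau j) / d (tau j) / W a.
  rewrite /Zt /Zmat mxE rAt mxE rK cK mxE -/(k a (tau j)).
  by field; rewrite ?d0 ?e0 ?W0.
have c0 j : c (tau j) != 0.
  rewrite /c /cnt pnatr_eq0 -lt0n; apply/card_gt0P; exists j; by rewrite inE.
have Zt2 a j : Zt a j = Z a (tau j) / c (tau j).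
  by rewrite Zt1 Z1; field; rewrite ?d0 ?c0 ?W0.
have cZt j : colsum Zt j = colsum Z (tau j) / c (tau j).
  by rewrite /colsum mulr_suml; apply: eq_bigr => a _; rewrite Zt2.
have cZ0 q : colsum Z q != 0 by rewrite gt_eqF ?HZ.
have key : Z *m invmx (Lam Z) *m Z^T = Zt *m invmx (Lam Zt) *m Zt^T.
  rewrite gram_eq // gram_eq; last by move=> j; rewrite gt_eqF ?HZt.
  apply/matrixP => a b; rewrite !mxE.
  rewrite (eq_bigr (fun j => (fun q => Z a q / c q * (Z b q / c q) / (colsum Z q / c q)) (tau j))); last first.
    by move=> j _; rewrite !Zt2 cZt.
  rewrite (@sum_tau R n s tau (fun q => Z a q / c q * (Z b q / c q) / (colsum Z q / c q))); apply: eq_bigr => q _.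
  rewrite -/(c q); have [cq|cq] := eqVneq (c q) 0.
    by rewrite Z1 cq !(mul0r, mulr0, invr0).
  by field; rewrite ?cq ?cZ0.
by rewrite /L key.
Qed.
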